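(* For every instance such that $|S_2|=0$ and $\pi_1+\pi_3+\pi_4-1=0$, we have $H^{PW''}\le \tfrac{3}{2}H^*$.
   Context: An instance consists of an integer $n\ge 1$ and growth rates $1=h(1)\ge h(2)\ge\cdots\ge h(n)>0$ of bamboos $b_1,\dots,b_n$. Bamboo Garden Trimming (discrete version): - All heights are $0$ initially. - On each day $t=1,2,\dots$ every bamboo $b_j$ grows by $h(j)$. - At the end of each day the gardener cuts exactly one bamboo $\sigma(t)\in\{1,\dots,n\}$ back to height $0$. The height of a schedule $\sigma:\mathbb{N}\to\{1,\dots,n\}$ is the supremum, over all days $t$ and all $j$, of the height of $b_j$ at the end of day $t$ just before the cut. $H^*$ denotes the infimum of this height over all schedules. Value of algorithm PW'': - Split $\{1,\dots,n\}$ into four sets: - $S_1=\{j: \tfrac23<h(j)\le 1\}$; - $S_2=\{j:\tfrac12<h(j)\le\tfrac23\}$; - $S_3=\{j: h(j)\le\tfrac12 \text{ and } \tfrac23 2^{-k}<h(j)\le 2^{-k}\text{ for some integer }k\ge1\}$; - $S_4=\{j: h(j)\le\tfrac12\text{ and } 2^{-(k+1)}<h(j)\le \tfrac23 2^{-k}\text{ for some integer }k\ge 1\}$. - Modified growths: $h''(j)=2^{-k}$ for $j\in S_3$ and $h''(j)=\tfrac23 2^{-k}$ for $j\in S_4$, with $k$ as in the definition of the set. - Let $\pi_1=|S_1|$, $sh_3=\sum_{j\in S_3}h''(j)$, $sh_4=\sum_{j\in S_4}h''(j)$, $\pi_3=\lfloor sh_3\rfloor$, $\pi_4=\lfloor sh_4\rfloor$,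 $f_3=sh_3-\pi_3$, $f_4=sh_4-\pi_4$. - Option (a): $\pi_R(a)=\lceil f_3+f_4\rceil$ and $z(a)=\pi_1+|S_2|+\pi_3+\pi_4+\pi_R(a)$. - Option (b): if $S_2=\emptyset$ put $z(b)=+\infty$. Otherwise let $h^*=\max_{j\in S_2}h(j)$ and $f_2=\tfrac12$ if $|S_2|$ is odd, $f_2=0$ if $|S_2|$ is even. Then $\pi_R(b)=\lceil f_2+f_3+f_4\rceil$ and $z(b)=2h^*\,(\pi_1+\lfloor |S_2|/2\rfloor+\pi_3+\pi_4+\pi_R(b))$. - The value returned by algorithm PW'' is $H^{PW''}=\min\{z(a),z(b)\}$. The paper takes this as the maximum height of the periodic pinwheel trimming schedule that it builds from these partitions. *)

(* Defs.v *)
From Stdlib Require Import Reals Lra Lia Arith.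
Open Scope R_scope.

(** Bamboos are indexed 1..n; growth rates h : nat -> R (values outside 1..n unused). *)

Definition instance (n : nat) (h : nat -> R) : Prop :=
  (1 <= n)%nat /\ h 1%nat = 1 /\
  (forall j, (1 <= j < n)%nat -> h (S j) <= h j) /\
  0 < h n.

(* A schedule: sigma t is the bamboo cut at the end of day t (days t >= 1). *)
Definition valid_schedule (n : nat) (sigma : nat -> nat) : Prop :=
  forall t, (1 <= sigma t <= n)%nat.

(* Height of bamboo j at the end of day t, after the cut of day t (day 0 = start). *)
Fixpoint after_cut (h : nat -> R) (sigma : nat -> nat) (j : nat) (t : nat) : R :=
  match t with
  | O => 0
  | S t' => if Nat.eqb (sigma t) j then 0 else after_cut h sigma j t' + h j
  end.

(* Height of bamboo j at the end of day t (t >= 1), just before the cut. *)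
Definition before_cut (h : nat -> R) (sigma : nat -> nat) (j t : nat) : R :=
  after_cut h sigma j (pred t) + h j.

Definition heights (n : nat) (h : nat -> R) (sigma : nat -> nat) (x : R) : Prop :=
  exists t j, (1 <= t)%nat /\ (1 <= j <= n)%nat /\ x = before_cut h sigma j t.

Definition is_glb (E : R -> Prop) (m : R) : Prop :=
  (forall x, E x -> m <= x) /\ (forall m', (forall x, E x -> m' <= x) -> m' <= m).

(* Hs is the height (supremum) of some schedule; schedules with unbounded
   heights have height +infinity and hence do not affect the infimum. *)
Definition schedule_height_value (n : nat) (h : nat -> R) (Hs : R) : Prop :=
  exists sigma, valid_schedule n sigma /\ is_lub (heights n h sigma) Hs.

Definition is_optimal_height (n : nat) (h : nat -> R) (Hstar : R) : Prop :=
  is_glb (schedule_height_value n h) Hstar.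

Definition floorZ (x : R) : Z := Int_part x.
Definition ceilZ (x : R) : Z := (- Int_part (- x))%Z.

Fixpoint sumR (f : nat -> R) (n : nat) : R :=
  match n with O => 0 | S m => sumR f m + f n end.
Fixpoint countN (p : nat -> bool) (n : nat) : nat :=
  match n with O => O | S m => (countN p m + (if p n then 1 else 0))%nat end.
(* maximum of f j over j in 1..n with p j (0 if none) *)
Fixpoint maxR (p : nat -> bool) (f : nat -> R) (n : nat) : R :=
  match n with O => 0 | S m => if p n then Rmax (maxR p f m) (f n) else maxR p f m end.

(* For 0 < x <= 1/2, level x is the unique k >= 1 with 2^-(k+1) < x <= 2^-k,
   i.e. k = floor(log2(1/x)). *)
Definition level (x : R) : nat := Z.to_nat (Int_part (- ln x / ln 2)).

Definition pow2neg (k : nat) : R := (/ 2) ^ k.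

Definition inS1 (x : R) : bool := if Rlt_dec (2/3) x then true else false.
Definition inS2 (x : R) : bool :=
  if Rlt_dec (1/2) x then (if Rle_dec x (2/3) then true else false) else false.
Definition inS3 (x : R) : bool :=
  if Rle_dec x (1/2) then
    (if Rlt_dec (2/3 * pow2neg (level x)) x then true else false) else false.
Definition inS4 (x : R) : bool :=
  if Rle_dec x (1/2) then
    (if Rle_dec x (2/3 * pow2neg (level x)) then true else false) else false.

Definition h3 (x : R) : R := pow2neg (level x).
Definition h4 (x : R) : R := 2/3 * pow2neg (level x).

Section PW.
Variables (n : nat) (h : nat -> R).

Definition pi1 : nat := countN (fun j => inS1 (h j)) n.
Definition card_S2 : nat := countN (fun j => inS2 (h j)) n.
Definition sh3 : R := sumR (fun j => if inS3 (h j) then h3 (h j) else 0) n.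
Definition sh4 : R := sumR (fun j => if inS4 (h j) then h4 (h j) else 0) n.
Definition pi3 : Z := floorZ sh3.
Definition pi4 : Z := floorZ sh4.
Definition f3 : R := sh3 - IZR pi3.
Definition f4 : R := sh4 - IZR pi4.

Definition z_a : R :=
  INR pi1 + INR card_S2 + IZR pi3 + IZR pi4 + IZR (ceilZ (f3 + f4)).

Definition h_star_S2 : R := maxR (fun j => inS2 (h j)) h n.
Definition f2 : R := if Nat.odd card_S2 then 1/2 else 0.
(* z(b), meaningful when S2 is nonempty *)
Definition z_b : R :=
  2 * h_star_S2 *
  (INR pi1 + INR (Nat.div2 card_S2) + IZR pi3 + IZR pi4 + IZR (ceilZ (f2 + f3 + f4))).

(* H^{PW''} = min{z(a), z(b)} with z(b) = +infinity when S2 is empty *)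
Definition H_PW : R := if Nat.eqb card_S2 0 then z_a else Rmin z_a z_b.

End PW.

(* Main.v *)
Require Import Defs.
From Stdlib Require Import Reals.
From Stdlib Require Import Lra Lia ZArith.
Open Scope R_scope.

Lemma Int_part_0 : Int_part 0 = 0%Z.
Proof.
  destruct (base_Int_part 0) as [H1 H2].
  assert (-1 < Int_part 0)%Z by (apply lt_IZR; lra).
  assert (Int_part 0 <= 0)%Z by (apply le_IZR; lra).
  lia.
Qed.

Lemma ceil_le2 x : x < 2 -> (ceilZ x <= 2)%Z.
Proof.
  intro Hx. unfold ceilZ. destruct (base_Int_part (-x)) as [H1 H2].
  assert (-3 < Int_part (-x))%Z by (apply lt_IZR; lra). lia.
Qed.

Lemma frac_bounds x : 0 <= x - IZR (Int_part x) < 1.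
Proof. destruct (base_Int_part x). lra. Qed.

Lemma after_cut_nonneg h sigma j t : 0 <= h j -> 0 <= after_cut h sigma j t.
Proof.
  intro H; induction t; simpl; [lra|]. destruct (Nat.eqb _ _); lra.
Qed.

Lemma mono n h : instance n h -> forall k j, (1 <= j)%nat -> (j + k <= n)%nat -> h (j+k)%nat <= h j.
Proof.
  intros [_ [_ [Hm _]]] k. induction k; intros j Hj Hjk.
  - rewrite Nat.add_0_r; lra.
  - rewrite Nat.add_succ_r.
    assert (h (S (j+k)) <= h (j+k)%nat) by (apply Hm; lia).
    specialize (IHk j Hj ltac:(lia)). lra.
Qed.

Lemma lb1 n h sigma x : instance n h -> is_lub (heights n h sigma) x -> 1 <= x.
Proof.
  intros [Hn [H1 _]] [Hub _]. apply Hub. exists 1%nat, 1%nat.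
  split; [lia|split;[lia|]]. unfold before_cut; simpl. rewrite H1; ring.
Qed.

Lemma lb2 n h sigma x : instance n h -> (2 <= n)%nat -> is_lub (heights n h sigma) x -> 2 <= x.
Proof.
  intros Hi Hn2 Hl. pose proof Hi as [Hn [H1 [_ Hpos]]]. destruct Hl as [Hub _].
  destruct (Rle_lt_dec 2 x) as [ok|bad]; auto. exfalso.
  assert (all1 : forall t, (1 <= t)%nat -> sigma t = 1%nat).
  { intros t Ht. destruct (Nat.eq_dec (sigma t) 1) as [e|ne]; auto. exfalso.
    assert (Hb : before_cut h sigma 1 (S t) <= x).
    { apply Hub. exists (S t), 1%nat. split; [lia|split;[lia|reflexivity]]. }
    unfold before_cut in Hb. simpl pred in Hb. destruct t as [|t']; [lia|].
    simpl after_cut in Hb. rewrite (proj2 (Nat.eqb_neq _ _) ne) in Hb.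
    assert (0 <= after_cut h sigma 1 t') by (apply after_cut_nonneg; lra).
    lra. }
  assert (Hac : forall t, after_cut h sigma 2 t = INR t * h 2%nat).
  { induction t; simpl after_cut. simpl; ring.
    rewrite (all1 (S t)) by lia. simpl Nat.eqb. rewrite IHt, S_INR; ring. }
  assert (Hh2 : h n <= h 2%nat).
  { replace n with (2 + (n-2))%nat at 1 by lia. apply (mono n h Hi); lia. }
  assert (Hp2 : 0 < h 2%nat) by lra.
  destruct (archimed (2 / h 2%nat)) as [Hup _].
  assert (Hpos2 : 0 < 2 / h 2%nat) by (apply Rdiv_lt_0_compat; lra).
  set (z := up (2 / h 2%nat)) in *.
  assert (Hz : (0 <= z)%Z) by (apply le_IZR; lra).
  set (t := Z.to_nat z).
  assert (Ht : INR t = IZR z) by (unfold t; rewrite INR_IZR_INZ, Z2Nat.id; auto).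
  assert (Hb : before_cut h sigma 2 (S t) <= x).
  { apply Hub. exists (S t), 2%nat. split; [lia|split;[lia|reflexivity]]. }
  unfold before_cut in Hb. simpl pred in Hb. rewrite Hac, Ht in Hb.
  assert (IZR z * h 2%nat > 2).
  { apply (Rmult_lt_compat_r (h 2%nat)) in Hup; auto.
    unfold Rdiv in Hup. rewrite Rmult_assoc, Rinv_l in Hup; lra. }
  lra.
Qed.

Theorem proposition8 (n : nat) (h : nat -> R) (Hstar : R) :
  instance n h ->
  card_S2 n h = 0%nat ->
  (Z.of_nat (pi1 n h) + pi3 n h + pi4 n h - 1 = 0)%Z ->
  is_optimal_height n h Hstar ->
  H_PW n h <= 3 / 2 * Hstar.
Proof.
  intros Hi Hc Hp [_ Hglb].
  unfold H_PW. rewrite Hc. simpl Nat.eqb. cbv iota. unfold z_a. rewrite Hc.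
  assert (Hs : INR (pi1 n h) + INR 0 + IZR (pi3 n h) + IZR (pi4 n h) = 1).
  { rewrite INR_IZR_INZ. simpl INR. rewrite Rplus_0_r, <- !plus_IZR.
    replace (Z.of_nat (pi1 n h) + pi3 n h + pi4 n h)%Z with 1%Z by lia. reflexivity. }
  rewrite Hs.
  pose proof Hi as [Hn _].
  destruct (Nat.eq_dec n 1) as [e|ne].
  - subst n.
    assert (H1s : 1 <= Hstar).
    { apply Hglb. intros x [sigma [_ Hl]]. eapply lb1; eauto. }
    assert (E3 : sh3 1 h = 0).
    { unfold sh3. simpl. destruct Hi as [_ [Hh1 _]]. rewrite Hh1.
      unfold inS3. destruct (Rle_dec 1 (1/2)); [lra|]. ring. }
    assert (E4 : sh4 1 h = 0).
    { unfold sh4. simpl. destruct Hi as [_ [Hh1 _]]. rewrite Hh1.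
      unfold inS4. destruct (Rle_dec 1 (1/2)); [lra|]. ring. }
    assert (Ef : f3 1 h + f4 1 h = 0).
    { unfold f3, f4, pi3, pi4, floorZ. rewrite E3, E4, Int_part_0. simpl; ring. }
    rewrite Ef. unfold ceilZ. rewrite Ropp_0, Int_part_0. simpl. lra.
  - assert (H2s : 2 <= Hstar).
    { apply Hglb. intros x [sigma [_ Hl]]. eapply lb2; eauto. lia. }
    assert (Hf : f3 n h + f4 n h < 2).
    { pose proof (frac_bounds (sh3 n h)). pose proof (frac_bounds (sh4 n h)).
      unfold f3, f4, pi3, pi4, floorZ. lra. }
    apply ceil_le2 in Hf. apply IZR_le in Hf. lra.
Qed.
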